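(* For each $p>0$, there exists a $\Sigma^0_p$ equivalence relation $E$ on $\omega$ which is complete under finitary reducibility among $\Sigma^0_p$ equivalence relations (every $\Sigma^0_p$ equivalence relation $F$ satisfies $F\leq_c^{<\omega}E$), but is not complete under computable reducibility among them (some $\Sigma^0_p$ equivalence relation $F$ has $F\not\leq_cE$).
   Context: For equivalence relations $E,F$ on $\omega$, $F\leq_cE$ means there is a total computable $g$ with $x\,F\,y\iff g(x)\,E\,g(y)$ for all $x,y$. $F\leq_c^{<\omega}E$ means there is one total computable function which, given $n\ge1$ and an $n$-tuple $(x_0,\dots,x_{n-1})$, outputs an $n$-tuple $(y_0,\dots,y_{n-1})$ with $x_i\,F\,x_j\iff y_i\,E\,y_j$ for all $i<j<n$. A $\Sigma^0_p$ equivalence relation is an equivalence relation on $\omega$ that is a $\Sigma^0_p$ subset of $\omega\times\omega$. *)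

(* Defs.v *)
From Stdlib Require Import List Arith.
Import ListNotations.

Inductive recf : Type :=
| RZero : recf
| RSucc : recf
| RProj : nat -> recf                (* i-th argument (0 if absent) *)
| RComp : recf -> list recf -> recf
| RPrim : recf -> recf -> recf       (* primitive recursion on first arg *)
| RMu   : recf -> recf.

Inductive eval : recf -> list nat -> nat -> Prop :=
| eZero xs : eval RZero xs 0
| eSucc x xs : eval RSucc (x :: xs) (S x)
| eProj i xs : eval (RProj i) xs (nth i xs 0)
| eComp f gs xs ys v : evals gs xs ys -> eval f ys v -> eval (RComp f gs) xs v
| ePrim0 f g xs v : eval f xs v -> eval (RPrim f g) (0 :: xs) v
| ePrimS f g n xs r v :
    eval (RPrim f g) (n :: xs) r -> eval g (n :: r :: xs) v ->
    eval (RPrim f g) (S n :: xs) v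
| eMu f xs y :
    eval f (y :: xs) 0 ->
    (forall z, z < y -> exists k, eval f (z :: xs) (S k)) ->
    eval (RMu f) xs y
with evals : list recf -> list nat -> list nat -> Prop :=
| esNil xs : evals [] xs []
| esCons g gs xs y ys : eval g xs y -> evals gs xs ys -> evals (g :: gs) xs (y :: ys).

Definition computable (g : nat -> nat) : Prop :=
  exists c : recf, forall x, eval c [x] (g x).

(* A set of naturals is computable (decidable): its characteristic
   function (0 = in, 1 = out) is computed by a total program. *)
Definition decidable_set (A : nat -> Prop) : Prop :=
  exists c : recf, forall x, (A x -> eval c [x] 0) /\ (~ A x -> eval c [x] 1).

Definition cpair (x y : nat) : nat := (x + y) * (x + y + 1) / 2 + y.

Fixpoint code_seq (s : list nat) : nat :=
  match s with
  | [] => 0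
  | x :: s' => S (cpair x (code_seq s'))
  end.

(* Arithmetical hierarchy for sets of naturals:
   Sigma^0_0 = computable; Sigma^0_{p+1} = exists y. Pi^0_p,
   where Pi^0_p sets are complements of Sigma^0_p sets. *)
Fixpoint Sigma0 (p : nat) (A : nat -> Prop) : Prop :=
  match p with
  | 0 => decidable_set A
  | S q => exists B : nat -> Prop, Sigma0 q B /\
             forall x, A x <-> exists y, ~ B (cpair x y)
  end.

Definition Sigma0_rel (p : nat) (E : nat -> nat -> Prop) : Prop :=
  Sigma0 p (fun n => exists x y, n = cpair x y /\ E x y).

Definition equivalence_rel (E : nat -> nat -> Prop) : Prop :=
  (forall x, E x x) /\ (forall x y, E x y -> E y x) /\
  (forall x y z, E x y -> E y z -> E x z).

Definition Sigma0_eqrel (p : nat) (E : nat -> nat -> Prop) : Prop :=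
  equivalence_rel E /\ Sigma0_rel p E.

Definition creducible (F E : nat -> nat -> Prop) : Prop :=
  exists g : nat -> nat, computable g /\
    forall x y, F x y <-> E (g x) (g y).

(* Finitary reducibility F <=_c^{<omega} E: one total computable function
   (acting on codes of finite tuples) sending each n-tuple (n >= 1) to an
   n-tuple that preserves and reflects the relation pairwise. *)
Definition fin_reducible (F E : nat -> nat -> Prop) : Prop :=
  exists f : list nat -> list nat,
    (exists c : recf, forall s, eval c [code_seq s] (code_seq (f s))) /\
    forall s, 1 <= length s ->
      length (f s) = length s /\
      forall i j, i < j < length s ->
        (F (nth i s 0) (nth j s 0) <-> E (nth i (f s) 0) (nth j (f s) 0)).

(* Main.v *)
From Stdlib Require Import List Arith Lia Bool Classical ClassicalEpsilon.
Import ListNotations.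
Open Scope bool_scope.
Require Import Defs.

Fixpoint tri (d:nat) : nat := match d with 0 => 0 | S m => tri m + S m end.
Lemma tri_eq d : 2 * tri d = d * (d+1).
Proof. induction d; simpl; nia. Qed.
Lemma cpair_tri x y : cpair x y = tri (x+y) + y.
Proof.
  unfold cpair. f_equal. rewrite <- tri_eq. rewrite Nat.mul_comm. apply Nat.div_mul. lia.
Qed.
Lemma tri_mono a b : a <= b -> tri a <= tri b.
Proof. induction 1; simpl; lia. Qed.

Fixpoint dg (n:nat) : nat := match n with 0 => 0 | S m => let r := dg m in
  if tri (S r) <=? S m then S r else r end.
Lemma dg_spec n : tri (dg n) <= n < tri (S (dg n)).
Proof.
  induction n; simpl. lia.
  destruct (Nat.leb_spec (tri (dg n) + S (dg n)) (S n)); simpl in *; lia.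
Qed.
Lemma dg_uniq a n : tri a <= n < tri (S a) -> dg n = a.
Proof.
  intros H. pose proof (dg_spec n).
  destruct (Nat.lt_trichotomy a (dg n)) as [h|[h|h]]; auto.
  - assert (tri (S a) <= tri (dg n)) by (apply tri_mono; lia). lia.
  - assert (tri (S (dg n)) <= tri a) by (apply tri_mono; lia). lia.
Qed.
Definition psnd n := n - tri (dg n).
Definition pfst n := dg n - psnd n.
Lemma dg_cpair x y : dg (cpair x y) = x + y.
Proof. apply dg_uniq. rewrite cpair_tri. simpl. lia. Qed.
Lemma psnd_cpair x y : psnd (cpair x y) = y.
Proof. unfold psnd. rewrite dg_cpair, cpair_tri. lia. Qed.
Lemma pfst_cpair x y : pfst (cpair x y) = x.
Proof. unfold pfst. rewrite psnd_cpair, dg_cpair. lia. Qed.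
Lemma cpair_inj x y x' y' : cpair x y = cpair x' y' -> x = x' /\ y = y'.
Proof. intros H. split. rewrite <- (pfst_cpair x y), H. apply pfst_cpair.
  rewrite <- (psnd_cpair x y), H. apply psnd_cpair. Qed.
Lemma cpair_surj n : cpair (pfst n) (psnd n) = n.
Proof.
  pose proof (dg_spec n). unfold pfst, psnd. rewrite cpair_tri. simpl in H.
  replace (dg n - (n - tri (dg n)) + (n - tri (dg n))) with (dg n) by lia. lia.
Qed.
Lemma psnd_le n : psnd n <= n.
Proof. unfold psnd; lia. Qed.
Lemma pfst_le n : pfst n <= n.
Proof. rewrite <- (cpair_surj n) at 2. rewrite cpair_tri. pose proof (tri_mono (pfst n) (pfst n + psnd n)).
  assert (pfst n <= tri (pfst n)) by (destruct (pfst n); simpl; lia). lia. Qed.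
Lemma cpair_ge_r x y : y <= cpair x y.
Proof. rewrite cpair_tri; lia. Qed.
Lemma cpair_ge_l x y : x <= cpair x y.
Proof. rewrite <- (pfst_cpair x y) at 1. apply pfst_le. Qed.

Definition lhd c := pfst (pred c).
Definition ltl c := psnd (pred c).
Definition itl k c := Nat.iter k ltl c.
Definition nthc k c := lhd (itl k c).
Fixpoint cntnz (k c : nat) : nat := match k with 0 => 0 | S m =>
  if itl m c =? 0 then cntnz m c else S (cntnz m c) end.
Definition lenc c := cntnz c c.

Lemma lhd_cons x s : lhd (code_seq (x::s)) = x.
Proof. unfold lhd; simpl. apply pfst_cpair. Qed.
Lemma ltl_cons x s : ltl (code_seq (x::s)) = code_seq s.
Proof. unfold ltl; simpl. apply psnd_cpair. Qed.
Lemma ltl_nil : ltl 0 = 0.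
Proof. reflexivity. Qed.
Lemma itl_code k s : itl k (code_seq s) = code_seq (skipn k s).
Proof.
  revert s; induction k; intros s; auto.
  unfold itl in *. rewrite Nat.iter_succ_r. destruct s.
  - simpl. rewrite ltl_nil. specialize (IHk []). rewrite skipn_nil in *. auto.
  - rewrite ltl_cons. simpl. auto.
Qed.
Lemma code_nil s : code_seq s = 0 <-> s = [].
Proof. destruct s; simpl; split; congruence. Qed.
Lemma nthc_code k s : nthc k (code_seq s) = nth k s 0.
Proof.
  unfold nthc. rewrite itl_code. revert s; induction k; intros [|x s]; simpl; auto.
  apply lhd_cons.
Qed.
Lemma len_le_code s : length s <= code_seq s.
Proof. induction s; simpl; auto. pose proof (cpair_ge_r a (code_seq s)). lia. Qed.
Lemma cntnz_code k s : cntnz k (code_seq s) = min k (length s).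
Proof.
  induction k; [reflexivity|]. cbn [cntnz]. rewrite itl_code. rewrite IHk.
  destruct (Nat.eqb_spec (code_seq (skipn k s)) 0) as [h|h].
  - apply code_nil in h. assert (length s <= k).
    { pose proof (length_skipn k s) as HH. rewrite h in HH. simpl in HH. lia. } lia.
  - assert (k < length s). { destruct (Nat.lt_ge_cases k (length s)); auto.
      rewrite skipn_all2 in h; auto. simpl in h; congruence. } lia.
Qed.
Lemma lenc_code s : lenc (code_seq s) = length s.
Proof. unfold lenc. rewrite cntnz_code. pose proof (len_le_code s). lia. Qed.
Lemma code_surj c : exists s, code_seq s = c.
Proof.
  induction c as [c IH] using lt_wf_ind. destruct c. exists []; auto.
  destruct (IH (psnd c)) as [s Hs]. pose proof (psnd_le c); lia.
  exists (pfst c :: s). simpl. rewrite Hs, cpair_surj. auto.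
Qed.
Lemma code_inj s t : code_seq s = code_seq t -> s = t.
Proof.
  revert t; induction s; intros [|y t]; simpl; try congruence.
  intros H. injection H as H. apply cpair_inj in H as [-> H]. f_equal; auto.
Qed.
Lemma itl_nz_code k s : itl k (code_seq s) <> 0 <-> k < length s.
Proof.
  rewrite itl_code. split; intros H.
  - destruct (Nat.lt_ge_cases k (length s)); auto. rewrite skipn_all2 in H; auto. simpl in H; congruence.
  - intro h. apply code_nil in h. pose proof (length_skipn k s) as HH. rewrite h in HH. simpl in HH; lia.
Qed.

Definition PR k (F : list nat -> nat) := exists c, forall xs, length xs = k -> eval c xs (F xs).
Definition PRb k (b : list nat -> bool) := PR k (fun xs => if b xs then 1 else 0).

Lemma PR_ext k F G : PR k F -> (forall xs, length xs = k -> F xs = G xs) -> PR k G.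
Proof. intros [c Hc] H. exists c. intros xs Hx. rewrite <- H; auto. Qed.
Lemma PR_nth k i : PR k (fun xs => nth i xs 0).
Proof. exists (RProj i). intros; constructor. Qed.
Lemma PR_S k f : PR k f -> PR k (fun xs => S (f xs)).
Proof. intros [c Hc]. exists (RComp RSucc [c]). intros xs Hx.
  econstructor. constructor. apply Hc; auto. constructor. constructor. Qed.
Lemma PR_const k n : PR k (fun _ => n).
Proof. induction n. exists RZero; intros; constructor. apply (PR_S k (fun _ => n)); auto. Qed.

Lemma evals_proj_gen l xs : evals (map RProj (seq (length l) (length xs))) (l++xs) xs.
Proof.
  revert l; induction xs; intros l; simpl. constructor.
  constructor.
  - replace a with (nth (length l) (l ++ a :: xs) 0) at 2. constructor.
    rewrite app_nth2; auto. rewrite Nat.sub_diag; auto.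
  - specialize (IHxs (l ++ [a])). rewrite <- app_assoc in IHxs. simpl in IHxs.
    rewrite length_app in IHxs. simpl in IHxs. rewrite Nat.add_1_r in IHxs. auto.
Qed.
Lemma evals_proj xs : evals (map RProj (seq 0 (length xs))) xs xs.
Proof. apply (evals_proj_gen [] xs). Qed.

Lemma PR_comp_aux k fs : Forall (PR k) fs ->
  exists cs, forall xs, length xs = k -> evals cs xs (map (fun f => f xs) fs).
Proof.
  induction 1. exists []. intros; constructor.
  destruct H as [c Hc]. destruct IHForall as [cs Hcs]. exists (c::cs). intros; constructor; auto.
Qed.
Lemma PR_comp k fs g : Forall (PR k) fs -> PR (length fs) g ->
  PR k (fun xs => g (map (fun f => f xs) fs)).
Proof.
  intros H [cg Hg]. destruct (PR_comp_aux k fs H) as [cs Hcs]. exists (RComp cg cs).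
  intros xs Hx. econstructor. apply Hcs; auto. apply Hg. rewrite length_map; auto.
Qed.
Lemma PR_app1 h k f : PR 1 (fun xs => h (nth 0 xs 0)) -> PR k f -> PR k (fun xs => h (f xs)).
Proof. intros H1 H2. apply (PR_comp k [f] _ (Forall_cons _ H2 (Forall_nil _)) H1). Qed.
Lemma PR_app2 h k f g : PR 2 (fun xs => h (nth 0 xs 0) (nth 1 xs 0)) -> PR k f -> PR k g ->
  PR k (fun xs => h (f xs) (g xs)).
Proof. intros H1 H2 H3.
  apply (PR_comp k [f;g] _ (Forall_cons _ H2 (Forall_cons _ H3 (Forall_nil _))) H1). Qed.
Lemma PR_app3 h k f g u : PR 3 (fun xs => h (nth 0 xs 0) (nth 1 xs 0) (nth 2 xs 0)) -> PR k f -> PR k g -> PR k u ->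
  PR k (fun xs => h (f xs) (g xs) (u xs)).
Proof. intros H1 H2 H3 H4.
  apply (PR_comp k [f;g;u] _ (Forall_cons _ H2 (Forall_cons _ H3 (Forall_cons _ H4 (Forall_nil _)))) H1). Qed.

Lemma PR_tl k f : PR k f -> PR (S k) (fun ys => f (tl ys)).
Proof.
  intros [c Hc]. exists (RComp c (map RProj (seq 1 k))). intros [|y ys] Hy; simpl in Hy; try lia.
  econstructor. 2: apply Hc; simpl; lia. injection Hy as <-.
  apply (evals_proj_gen [y] ys).
Qed.
Lemma PR_keep0 k F : PR (S k) F -> PR (S (S k)) (fun ys => F (nth 0 ys 0 :: tl (tl ys))).
Proof.
  intros [c Hc]. exists (RComp c (RProj 0 :: map RProj (seq 2 k))).
  intros [|y [|z ys]] Hy; simpl in Hy; try lia. injection Hy as <-.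
  econstructor. 2: apply Hc; simpl; lia. constructor. constructor.
  apply (evals_proj_gen [y;z] ys).
Qed.

Lemma PR_rec0 k z s n : PR k z -> PR (S (S k)) s -> PR k n ->
  PR k (fun xs => nat_rect (fun _ => nat) (z xs) (fun m r => s (m::r::xs)) (n xs)).
Proof.
  intros [cz Hz] [cs Hs] [cn Hn]. exists (RComp (RPrim cz cs) (cn :: map RProj (seq 0 k))).
  intros xs Hx. econstructor. constructor. apply Hn; auto. subst k. apply evals_proj.
  generalize (n xs). induction n0; simpl.
  - constructor. auto.
  - econstructor. apply IHn0. apply Hs. simpl; auto.
Qed.
Lemma PR_rec k z s n : PR k z -> PR (S (S k)) (fun ys => s (nth 0 ys 0) (nth 1 ys 0) (tl (tl ys))) -> PR k n ->
  PR k (fun xs => nat_rect (fun _ => nat) (z xs) (fun m r => s m r xs) (n xs)).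
Proof. intros. apply (PR_rec0 k z (fun ys => s (nth 0 ys 0) (nth 1 ys 0) (tl (tl ys))) n); auto. Qed.

Lemma PR_nth_tl1 k i : PR k (fun ys => nth i (tl ys) 0).
Proof. eapply PR_ext. apply (PR_nth k (S i)). intros [|]; auto. destruct i; auto. Qed.
Lemma nth_tl_S i (ys : list nat) : nth i (tl ys) 0 = nth (S i) ys 0.
Proof. destruct ys; auto. destruct i; auto. Qed.
Lemma PR_nth_tl2 k i : PR k (fun ys => nth i (tl (tl ys)) 0).
Proof. eapply PR_ext. apply (PR_nth k (S (S i))). intros. rewrite !nth_tl_S. auto. Qed.
Lemma PR_nth_tl3 k i : PR k (fun ys => nth i (tl (tl (tl ys))) 0).
Proof. eapply PR_ext. apply (PR_nth k (3+i)). intros. rewrite !nth_tl_S. auto. Qed.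
Lemma PR_nth_tl4 k i : PR k (fun ys => nth i (tl (tl (tl (tl ys)))) 0).
Proof. eapply PR_ext. apply (PR_nth k (4+i)). intros. rewrite !nth_tl_S. auto. Qed.
Lemma PR_nth_tl5 k i : PR k (fun ys => nth i (tl (tl (tl (tl (tl ys))))) 0).
Proof. eapply PR_ext. apply (PR_nth k (5+i)). intros. rewrite !nth_tl_S. auto. Qed.
Lemma PR_nth_tl6 k i : PR k (fun ys => nth i (tl (tl (tl (tl (tl (tl ys)))))) 0).
Proof. eapply PR_ext. apply (PR_nth k (6+i)). intros. rewrite !nth_tl_S. auto. Qed.
Lemma PR_nth_tl7 k i : PR k (fun ys => nth i (tl (tl (tl (tl (tl (tl (tl ys))))))) 0).
Proof. eapply PR_ext. apply (PR_nth k (7+i)). intros. rewrite !nth_tl_S. auto. Qed.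
Lemma PR_nth_tl8 k i : PR k (fun ys => nth i (tl (tl (tl (tl (tl (tl (tl (tl ys)))))))) 0).
Proof. eapply PR_ext. apply (PR_nth k (8+i)). intros. rewrite !nth_tl_S. auto. Qed.

Lemma PR_add k f g : PR k f -> PR k g -> PR k (fun xs => f xs + g xs).
Proof.
  intros. eapply PR_ext. apply (PR_rec k g (fun m r xs => S r) f); auto.
  apply PR_S, PR_nth. intros xs _. simpl. induction (f xs); simpl; auto.
Qed.
Lemma PR_pred k f : PR k f -> PR k (fun xs => pred (f xs)).
Proof.
  intros. eapply PR_ext. apply (PR_rec k (fun _ => 0) (fun m r xs => m) f); auto.
  apply PR_const. apply PR_nth. intros xs _. simpl. destruct (f xs); auto.
Qed.
Lemma PR_sub k f g : PR k f -> PR k g -> PR k (fun xs => f xs - g xs).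
Proof.
  intros. eapply PR_ext. apply (PR_rec k f (fun m r xs => pred r) g); auto.
  apply PR_pred, PR_nth. intros xs _. simpl. induction (g xs); simpl. lia. rewrite IHn. lia.
Qed.
Lemma PR_ite k b f g : PRb k b -> PR k f -> PR k g -> PR k (fun xs => if b xs then f xs else g xs).
Proof.
  intros Hb Hf Hg. eapply PR_ext. apply (PR_rec k g (fun m r xs => f xs) (fun xs => if b xs then 1 else 0)); auto.
  apply (PR_tl (S k) (fun zs => f (tl zs))), PR_tl, Hf. intros xs _. simpl. destruct (b xs); auto.
Qed.
Lemma PRb_const k b : PRb k (fun _ => b).
Proof. exact (PR_const k (if b then 1 else 0)). Qed.
Lemma PRb_iszero k f : PR k f -> PRb k (fun xs => f xs =? 0).
Proof.
  intros. eapply PR_ext. apply (PR_rec k (fun _ => 1) (fun m r xs => 0) f); auto.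
  apply PR_const. apply PR_const. intros xs _. simpl. destruct (f xs); auto.
Qed.
Lemma PRb_eqb k f g : PR k f -> PR k g -> PRb k (fun xs => f xs =? g xs).
Proof.
  intros. eapply PR_ext. apply (PRb_iszero k (fun xs => (f xs - g xs) + (g xs - f xs))).
  apply PR_add; apply PR_sub; auto.
  intros xs _. simpl. destruct (Nat.eqb_spec (f xs) (g xs)); destruct (Nat.eqb_spec (f xs - g xs + (g xs - f xs)) 0); auto; lia.
Qed.
Lemma PRb_leb k f g : PR k f -> PR k g -> PRb k (fun xs => f xs <=? g xs).
Proof.
  intros. eapply PR_ext. apply (PRb_iszero k (fun xs => (f xs - g xs))).
  apply PR_sub; auto.
  intros xs _. simpl. destruct (Nat.leb_spec (f xs) (g xs)); destruct (Nat.eqb_spec (f xs - g xs) 0); auto; lia.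
Qed.
Lemma PRb_ltb k f g : PR k f -> PR k g -> PRb k (fun xs => f xs <? g xs).
Proof. intros. apply (PRb_leb k (fun xs => S (f xs))); auto. apply PR_S; auto. Qed.
Lemma PRb_andb k a b : PRb k a -> PRb k b -> PRb k (fun xs => a xs && b xs).
Proof. intros. eapply PR_ext. apply (PR_ite k a (fun xs => if b xs then 1 else 0) (fun _ => 0)); auto. apply PR_const.
  intros xs _. simpl. destruct (a xs); auto. Qed.
Lemma PRb_orb k a b : PRb k a -> PRb k b -> PRb k (fun xs => a xs || b xs).
Proof. intros. eapply PR_ext. apply (PR_ite k a (fun _ => 1) (fun xs => if b xs then 1 else 0)); auto. apply PR_const.
  intros xs _. simpl. destruct (a xs); auto. Qed.
Lemma PRb_negb k a : PRb k a -> PRb k (fun xs => negb (a xs)).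
Proof. intros. eapply PR_ext. apply (PR_ite k a (fun _ => 0) (fun _ => 1)); auto; apply PR_const.
  intros xs _. simpl. destruct (a xs); auto. Qed.
Lemma PRb_ite k a b c : PRb k a -> PRb k b -> PRb k c -> PRb k (fun xs => if a xs then b xs else c xs).
Proof. intros. eapply PR_ext. apply (PR_ite k a (fun xs => if b xs then 1 else 0) (fun xs => if c xs then 1 else 0)); auto.
  intros xs _. simpl. destruct (a xs); auto. Qed.

Fixpoint bforall (n:nat) (P : nat -> bool) : bool := match n with 0 => true | S m => bforall m P && P m end.
Fixpoint bexists (n:nat) (P : nat -> bool) : bool := match n with 0 => false | S m => bexists m P || P m end.
Lemma bforall_spec n P : bforall n P = true <-> forall l, l < n -> P l = true.
Proof. induction n; simpl. split; auto; intros; lia.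
  rewrite Bool.andb_true_iff, IHn. split. intros [H1 H2] l Hl. destruct (Nat.eq_dec l n); subst; auto; apply H1; lia.
  intros H; split; auto. Qed.
Lemma bexists_spec n P : bexists n P = true <-> exists l, l < n /\ P l = true.
Proof. induction n; simpl. split; intros; try discriminate. destruct H; lia.
  rewrite Bool.orb_true_iff, IHn. split. intros [[l [H1 H2]]|H]; eauto.
  intros [l [H1 H2]]. destruct (Nat.eq_dec l n); subst; auto. left; exists l; split; auto; lia. Qed.

Lemma PRb_bforall k m b : PRb (S k) (fun ys => b (nth 0 ys 0) (tl ys)) -> PR k m ->
  PRb k (fun xs => bforall (m xs) (fun l => b l xs)).
Proof.
  intros Hb Hm. apply PR_keep0 in Hb. cbn beta in Hb.
  eapply PR_ext. apply (PR_rec k (fun _ => 1) (fun l r xs => if b l xs then r else 0) m); auto.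
  apply PR_const. apply (PR_ite (S (S k))); auto. apply PR_nth. apply PR_const.
  intros xs _. simpl. induction (m xs); simpl; auto. rewrite IHn. destruct (bforall n _), (b n xs); auto.
Qed.
Lemma PRb_bexists k m b : PRb (S k) (fun ys => b (nth 0 ys 0) (tl ys)) -> PR k m ->
  PRb k (fun xs => bexists (m xs) (fun l => b l xs)).
Proof.
  intros Hb Hm. apply PR_keep0 in Hb. cbn beta in Hb.
  eapply PR_ext. apply (PR_rec k (fun _ => 0) (fun l r xs => if b l xs then 1 else r) m); auto.
  apply PR_const. apply (PR_ite (S (S k))); auto. apply PR_const. apply PR_nth.
  intros xs _. simpl. induction (m xs); simpl; auto. rewrite IHn. destruct (bexists n _), (b n xs); auto.
Qed.

Ltac pr_base :=
  first [ apply PR_nth | apply PR_nth_tl1 | apply PR_nth_tl2 | apply PR_nth_tl3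
        | apply PR_nth_tl4 | apply PR_nth_tl5 | apply PR_nth_tl6 | apply PR_nth_tl7 | apply PR_nth_tl8
        | apply PR_const ].
Ltac pr_genb :=
  first [ apply PRb_const | apply PRb_bforall | apply PRb_bexists | apply PRb_andb | apply PRb_orb | apply PRb_negb
        | apply PRb_eqb | apply PRb_leb | apply PRb_ltb | apply PRb_ite ].
Ltac pr_gen :=
  first [ apply PR_ite | apply PR_rec | apply PR_add | apply PR_sub | apply PR_pred | apply PR_S ].

Ltac pr_fun := fail.
Ltac pr_funb := fail.
Ltac pr := repeat (cbv beta; first [ assumption |
   match goal with
   | |- PRb _ _ => first [pr_funb | pr_genb]
   | |- PR _ _ => first [pr_base | pr_fun | pr_gen] end]).

Lemma PR_tri k f : PR k f -> PR k (fun xs => tri (f xs)).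
Proof. intros. eapply PR_ext. apply (PR_rec k (fun _ => 0) (fun m r xs => r + S m) f); auto.
  apply PR_const. apply PR_add. apply PR_nth. apply PR_S, PR_nth.
  intros xs _. simpl. induction (f xs); simpl; auto. Qed.
Ltac pr_fun ::= first [apply PR_tri].
Lemma PR_dg k f : PR k f -> PR k (fun xs => dg (f xs)).
Proof. intros. eapply PR_ext.
  apply (PR_rec k (fun _ => 0) (fun m r xs => if tri (S r) <=? S m then S r else r) f); auto.
  all: pr.
  intros xs _. simpl. induction (f xs); simpl; auto; try (rewrite IHn; auto). Qed.
Lemma PR_psnd k f : PR k f -> PR k (fun xs => psnd (f xs)).
Proof. intros. unfold psnd. apply PR_sub; auto. apply PR_tri, PR_dg; auto. Qed.
Lemma PR_pfst k f : PR k f -> PR k (fun xs => pfst (f xs)).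
Proof. intros. unfold pfst. apply PR_sub. apply PR_dg; auto. apply PR_psnd; auto. Qed.
Lemma PR_cpair k f g : PR k f -> PR k g -> PR k (fun xs => cpair (f xs) (g xs)).
Proof. intros. eapply PR_ext. apply (PR_add k (fun xs => tri (f xs + g xs)) g); auto.
  apply PR_tri, PR_add; auto. intros. symmetry; apply cpair_tri. Qed.
Lemma PR_lhd k f : PR k f -> PR k (fun xs => lhd (f xs)).
Proof. intros. apply PR_pfst, PR_pred; auto. Qed.
Lemma PR_ltl k f : PR k f -> PR k (fun xs => ltl (f xs)).
Proof. intros. apply PR_psnd, PR_pred; auto. Qed.
Lemma PR_itl k f g : PR k f -> PR k g -> PR k (fun xs => itl (f xs) (g xs)).
Proof. intros. eapply PR_ext. apply (PR_rec k g (fun m r xs => ltl r) f); auto.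
  apply PR_ltl, PR_nth. intros xs _. unfold itl. simpl. induction (f xs); simpl; auto; try (rewrite IHn; auto). Qed.
Lemma PR_nthc k f g : PR k f -> PR k g -> PR k (fun xs => nthc (f xs) (g xs)).
Proof. intros. apply PR_lhd, PR_itl; auto. Qed.
Ltac pr_fun ::=
  first [ apply PR_cpair | apply PR_pfst | apply PR_psnd | apply PR_lhd | apply PR_ltl
        | apply PR_nthc | apply PR_itl | apply PR_tri | apply PR_dg ].
Lemma PR_cntnz k f g : PR k f -> PR k g -> PR k (fun xs => cntnz (f xs) (g xs)).
Proof. intros. eapply PR_ext.
  apply (PR_rec k (fun _ => 0) (fun m r xs => if itl m (g xs) =? 0 then r else S r) f); auto.
  all: pr. apply (PR_tl (S k) (fun ys => g (tl ys))), PR_tl; auto.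
  intros xs _. simpl. induction (f xs); simpl; auto; try (rewrite IHn; auto). Qed.
Lemma PR_lenc k f : PR k f -> PR k (fun xs => lenc (f xs)).
Proof. intros. apply PR_cntnz; auto. Qed.

Ltac pr_fun ::=
  first [ apply PR_cpair | apply PR_pfst | apply PR_psnd | apply PR_lhd | apply PR_ltl
        | apply PR_nthc | apply PR_itl | apply PR_lenc | apply PR_tri | apply PR_dg ].

Lemma PRb_beq k a b : PRb k a -> PRb k b -> PRb k (fun xs => Bool.eqb (a xs) (b xs)).
Proof. intros. eapply PR_ext. apply (PRb_ite k a b (fun xs => negb (b xs))); auto. apply PRb_negb; auto.
  intros xs _. simpl. destruct (a xs), (b xs); auto. Qed.
Ltac pr_genb ::=
  first [ apply PRb_const | apply PRb_bforall | apply PRb_bexists | apply PRb_andb | apply PRb_orb | apply PRb_negb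
        | apply PRb_eqb | apply PRb_leb | apply PRb_ltb | apply PRb_ite | apply PRb_beq ].

Fixpoint rcode (c:recf) : nat := match c with
 | RZero => cpair 0 0 | RSucc => cpair 1 0 | RProj i => cpair 2 i
 | RComp f gs => cpair 3 (cpair (rcode f) (code_seq (map rcode gs)))
 | RPrim f g => cpair 4 (cpair (rcode f) (rcode g))
 | RMu f => cpair 5 (rcode f) end.
Definition jcn c xsc v := cpair c (cpair xsc v).

Definition justb (d k : nat) : bool :=
 let J := nthc k d in let c := pfst J in let xsc := pfst (psnd J) in let v := psnd (psnd J) in
 let tag := pfst c in let arg := psnd c in
 if tag =? 0 then v =? 0
 else if tag =? 1 then negb (xsc =? 0) && (v =? S (lhd xsc))
 else if tag =? 2 then v =? nthc arg xsc
 else if tag =? 3 then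
   bexists k (fun m => (pfst (nthc m d) =? pfst arg) && (psnd (psnd (nthc m d)) =? v)
       && bforall (psnd arg + pfst (psnd (nthc m d))) (fun i => Bool.eqb (itl i (psnd arg) =? 0) (itl i (pfst (psnd (nthc m d))) =? 0))
       && bforall (psnd arg) (fun i => (itl i (psnd arg) =? 0) || bexists k (fun m' => nthc m' d =? jcn (nthc i (psnd arg)) xsc (nthc i (pfst (psnd (nthc m d)))))))
 else if tag =? 4 then
   negb (xsc =? 0) &&
   (if lhd xsc =? 0 then bexists k (fun m => nthc m d =? jcn (pfst arg) (ltl xsc) v)
    else bexists k (fun m => (pfst (nthc m d) =? c) && (pfst (psnd (nthc m d)) =? S (cpair (pred (lhd xsc)) (ltl xsc)))
         && bexists k (fun m' => nthc m' d =? jcn (psnd arg) (S (cpair (pred (lhd xsc)) (S (cpair (psnd (psnd (nthc m d))) (ltl xsc))))) v)))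
 else if tag =? 5 then
   bexists k (fun m => nthc m d =? jcn arg (S (cpair v xsc)) 0)
   && bforall v (fun z => bexists k (fun m => (pfst (nthc m d) =? arg) && (pfst (psnd (nthc m d)) =? S (cpair z xsc)) && negb (psnd (psnd (nthc m d)) =? 0)))
 else false.

Definition valid (d : nat) : bool := bforall d (fun k => (itl k d =? 0) || justb d k).
Definition contains (d j : nat) : bool := bexists d (fun k => negb (itl k d =? 0) && (nthc k d =? j)).

Ltac pr_fun ::=
  first [ apply PR_cpair | apply PR_pfst | apply PR_psnd | apply PR_lhd | apply PR_ltl
        | apply PR_nthc | apply PR_itl | apply PR_lenc | apply PR_tri | apply PR_dg ].

Lemma PRb_app1 (b : nat -> bool) k f : PRb 1 (fun xs => b (nth 0 xs 0)) -> PR k f -> PRb k (fun xs => b (f xs)).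
Proof. intros. apply (PR_app1 (fun n => if b n then 1 else 0)); auto. Qed.
Lemma PRb_app2 (b : nat -> nat -> bool) k f g : PRb 2 (fun xs => b (nth 0 xs 0) (nth 1 xs 0)) -> PR k f -> PR k g -> PRb k (fun xs => b (f xs) (g xs)).
Proof. intros. apply (PR_app2 (fun n m => if b n m then 1 else 0)); auto. Qed.
Lemma PRb_valid k f : PR k f -> PRb k (fun xs => valid (f xs)).
Proof. intros. apply PRb_app1; auto. unfold valid, justb, jcn. cbv zeta. pr. Qed.
Lemma PRb_contains k f g : PR k f -> PR k g -> PRb k (fun xs => contains (f xs) (g xs)).
Proof. intros. apply PRb_app2; auto. unfold contains. pr. Qed.

Definition justP (Ear : nat -> Prop) (J : nat) : Prop :=
 let c := pfst J in let xsc := pfst (psnd J) in let v := psnd (psnd J) in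
 let tag := pfst c in let arg := psnd c in
 if tag =? 0 then v = 0
 else if tag =? 1 then xsc <> 0 /\ v = S (lhd xsc)
 else if tag =? 2 then v = nthc arg xsc
 else if tag =? 3 then
   exists J', Ear J' /\ pfst J' = pfst arg /\ psnd (psnd J') = v
     /\ (forall i, i < psnd arg + pfst (psnd J') -> (itl i (psnd arg) = 0 <-> itl i (pfst (psnd J')) = 0))
     /\ (forall i, i < psnd arg -> itl i (psnd arg) <> 0 -> Ear (jcn (nthc i (psnd arg)) xsc (nthc i (pfst (psnd J')))))
 else if tag =? 4 then
   xsc <> 0 /\
   (if lhd xsc =? 0 then Ear (jcn (pfst arg) (ltl xsc) v)
    else exists J', Ear J' /\ pfst J' = c /\ pfst (psnd J') = S (cpair (pred (lhd xsc)) (ltl xsc))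
         /\ Ear (jcn (psnd arg) (S (cpair (pred (lhd xsc)) (S (cpair (psnd (psnd J')) (ltl xsc))))) v))
 else if tag =? 5 then
   Ear (jcn arg (S (cpair v xsc)) 0)
   /\ (forall z, z < v -> exists J', Ear J' /\ pfst J' = arg /\ pfst (psnd J') = S (cpair z xsc) /\ psnd (psnd J') <> 0)
 else False.

Lemma justP_mono (E1 E2 : nat -> Prop) J : (forall j, E1 j -> E2 j) -> justP E1 J -> justP E2 J.
Proof.
  intros HE. unfold justP; cbv zeta.
  destruct (pfst (pfst J) =? 0); auto. destruct (pfst (pfst J) =? 1); auto.
  destruct (pfst (pfst J) =? 2); auto.
  destruct (pfst (pfst J) =? 3).
  { intros [J' [h1 [h2 [h3 [h4 h5]]]]]. exists J'; repeat split; auto. apply h4; auto. apply h4; auto. }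
  destruct (pfst (pfst J) =? 4).
  { intros [h1 h2]; split; auto. destruct (lhd _ =? 0); auto.
    destruct h2 as [J' [a [b [c d]]]]. exists J'; auto. }
  destruct (pfst (pfst J) =? 5); auto.
  intros [h1 h2]; split; auto. intros z hz. destruct (h2 z hz) as [J' [a b]]. exists J'; auto.
Qed.

Lemma Nat_eqb_true a b : (a =? b) = true <-> a = b.
Proof. apply Nat.eqb_eq. Qed.

Lemma justb_spec d k : justb d k = true <-> justP (fun j => exists m, m < k /\ nthc m d = j) (nthc k d).
Proof.
  unfold justb, justP; cbv zeta. set (J := nthc k d).
  destruct (pfst (pfst J) =? 0). apply Nat.eqb_eq.
  destruct (pfst (pfst J) =? 1). rewrite andb_true_iff, negb_true_iff, Nat.eqb_neq, Nat.eqb_eq. tauto.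
  destruct (pfst (pfst J) =? 2). apply Nat.eqb_eq.
  destruct (pfst (pfst J) =? 3).
  { rewrite bexists_spec. split.
    - intros [m [hm H]]. rewrite !andb_true_iff, !Nat.eqb_eq in H. destruct H as [[[h1 h2] h3] h4].
      rewrite bforall_spec in h3, h4. exists (nthc m d). split. eauto. repeat split; auto.
      + intros Hi. specialize (h3 i H). rewrite Hi in h3. simpl in h3. destruct (_ =? 0) eqn:E in h3; try discriminate. apply Nat.eqb_eq; auto.
      + intros Hi. specialize (h3 i H). rewrite Hi in h3. simpl in h3. destruct (itl i (psnd (psnd (pfst J))) =? 0) eqn:E; try discriminate. apply Nat.eqb_eq; auto.
      + intros i hi hnz. specialize (h4 i hi). rewrite orb_true_iff, Nat.eqb_eq, bexists_spec in h4.
        destruct h4 as [h4|[m' [hm' h4]]]. contradiction. apply Nat.eqb_eq in h4. eauto.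
    - intros [J' [[m [hm <-]] [h2 [h3 [h4 h5]]]]]. exists m; split; auto.
      rewrite !andb_true_iff, !Nat.eqb_eq, !bforall_spec. repeat split; auto.
      + intros i hi. specialize (h4 i hi). apply eqb_true_iff.
        destruct (Nat.eqb_spec (itl i (psnd (psnd (pfst J)))) 0), (Nat.eqb_spec (itl i (pfst (psnd (nthc m d)))) 0); tauto.
      + intros i hi. rewrite orb_true_iff, Nat.eqb_eq. destruct (Nat.eq_dec (itl i (psnd (psnd (pfst J)))) 0); auto.
        right. destruct (h5 i hi n) as [m' [hm' e]]. apply bexists_spec. exists m'; split; auto. apply Nat.eqb_eq; auto. }
  destruct (pfst (pfst J) =? 4).
  { rewrite andb_true_iff, negb_true_iff, Nat.eqb_neq.
    destruct (lhd (pfst (psnd J)) =? 0).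
    - rewrite bexists_spec. split; intros [h1 h2]; split; auto.
      + destruct h2 as [m [hm e]]. apply Nat.eqb_eq in e. eauto.
      + destruct h2 as [m [hm e]]. exists m; split; auto. apply Nat.eqb_eq; auto.
    - rewrite bexists_spec. split; intros [h1 h2]; split; auto.
      + destruct h2 as [m [hm e]]. rewrite !andb_true_iff, !Nat.eqb_eq, bexists_spec in e.
        destruct e as [[e1 e2] [m' [hm' e3]]]. apply Nat.eqb_eq in e3. exists (nthc m d). repeat split; eauto.
      + destruct h2 as [J' [[m [hm <-]] [e1 [e2 [m' [hm' e3]]]]]]. exists m; split; auto.
        rewrite !andb_true_iff, !Nat.eqb_eq, bexists_spec. repeat split; auto. exists m'; split; auto. apply Nat.eqb_eq; auto. }
  destruct (pfst (pfst J) =? 5).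
  { rewrite andb_true_iff, bexists_spec, bforall_spec. split.
    - intros [[m [hm e]] h2]. apply Nat.eqb_eq in e. split; eauto.
      intros z hz. specialize (h2 z hz). apply bexists_spec in h2. destruct h2 as [m' [hm' e']].
      rewrite !andb_true_iff, !Nat.eqb_eq, negb_true_iff, Nat.eqb_neq in e'. destruct e' as [[e1 e2] e3].
      exists (nthc m' d); repeat split; eauto.
    - intros [[m [hm e]] h2]. split. exists m; split; auto. apply Nat.eqb_eq; auto.
      intros z hz. destruct (h2 z hz) as [J' [[m' [hm' <-]] [e1 [e2 e3]]]]. apply bexists_spec. exists m'; split; auto.
      rewrite !andb_true_iff, !Nat.eqb_eq, negb_true_iff, Nat.eqb_neq. auto. }
  split; [discriminate|tauto].
Qed.

Section Ind.
Variable P : recf -> list nat -> nat -> Prop.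
Variable Q : list recf -> list nat -> list nat -> Prop.
Hypothesis hZ : forall xs, P RZero xs 0.
Hypothesis hS : forall x xs, P RSucc (x::xs) (S x).
Hypothesis hP : forall i xs, P (RProj i) xs (nth i xs 0).
Hypothesis hC : forall f gs xs ys v, evals gs xs ys -> Q gs xs ys -> eval f ys v -> P f ys v -> P (RComp f gs) xs v.
Hypothesis hP0 : forall f g xs v, eval f xs v -> P f xs v -> P (RPrim f g) (0::xs) v.
Hypothesis hPS : forall f g n xs r v, eval (RPrim f g) (n::xs) r -> P (RPrim f g) (n::xs) r ->
   eval g (n::r::xs) v -> P g (n::r::xs) v -> P (RPrim f g) (S n :: xs) v.
Hypothesis hM : forall f xs y, eval f (y::xs) 0 -> P f (y::xs) 0 ->
   (forall z, z < y -> exists k, eval f (z::xs) (S k) /\ P f (z::xs) (S k)) -> P (RMu f) xs y.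
Hypothesis hN : forall xs, Q [] xs [].
Hypothesis hCo : forall g gs xs y ys, eval g xs y -> P g xs y -> evals gs xs ys -> Q gs xs ys -> Q (g::gs) xs (y::ys).

Fixpoint eval_ind2 c xs v (H : eval c xs v) {struct H} : P c xs v :=
  match H in eval c xs v return P c xs v with
  | eZero xs => hZ xs
  | eSucc x xs => hS x xs
  | eProj i xs => hP i xs
  | eComp f gs xs ys v H1 H2 => hC f gs xs ys v H1 (evals_ind2 _ _ _ H1) H2 (eval_ind2 _ _ _ H2)
  | ePrim0 f g xs v H1 => hP0 f g xs v H1 (eval_ind2 _ _ _ H1)
  | ePrimS f g n xs r v H1 H2 => hPS f g n xs r v H1 (eval_ind2 _ _ _ H1) H2 (eval_ind2 _ _ _ H2)
  | eMu f xs y H1 H2 => hM f xs y H1 (eval_ind2 _ _ _ H1)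
      (fun z hz => match H2 z hz with ex_intro _ k e => ex_intro _ k (conj e (eval_ind2 _ _ _ e)) end)
  end
with evals_ind2 gs xs ys (H : evals gs xs ys) {struct H} : Q gs xs ys :=
  match H in evals gs xs ys return Q gs xs ys with
  | esNil xs => hN xs
  | esCons g gs xs y ys H1 H2 => hCo g gs xs y ys H1 (eval_ind2 _ _ _ H1) H2 (evals_ind2 _ _ _ H2)
  end.
End Ind.

Lemma eval_det c xs v : eval c xs v -> forall v', eval c xs v' -> v = v'.
Proof.
  revert c xs v. apply (eval_ind2 (fun c xs v => forall v', eval c xs v' -> v = v')
     (fun gs xs ys => forall ys', evals gs xs ys' -> ys = ys')).
  - intros xs v' H; inversion H; auto.
  - intros x xs v' H; inversion H; auto.
  - intros i xs v' H; inversion H; auto.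
  - intros f gs xs ys v _ IH1 _ IH2 v' H. inversion H; subst. match goal with h : evals _ _ _ |- _ => apply IH1 in h end. subst. auto.
  - intros f g xs v _ IH v' H. inversion H; subst. auto.
  - intros f g n xs r v _ IH1 _ IH2 v' H. inversion H; subst. match goal with h : eval (RPrim _ _) _ _ |- _ => apply IH1 in h end. subst. auto.
  - intros f xs y _ IH1 IH2 v' H. inversion H as [| | | | | |f0 xs0 y0 HA HB]; subst.
    destruct (Nat.lt_trichotomy y v') as [h|[h|h]]; auto.
    + destruct (HB y h) as [k hk]. apply IH1 in hk. discriminate.
    + destruct (IH2 v' h) as [k [_ hk]]. apply hk in HA. discriminate.
  - intros xs ys' H; inversion H; auto.
  - intros g gs xs y ys _ IH1 _ IH2 ys' H. inversion H; subst. f_equal; auto.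
Qed.

Lemma evals_length gs xs ys : evals gs xs ys -> length gs = length ys.
Proof. induction 1; simpl; auto. Qed.
Lemma evals_nth gs xs ys : length gs = length ys -> (forall i, i < length gs -> eval (nth i gs RZero) xs (nth i ys 0)) -> evals gs xs ys.
Proof.
  revert ys; induction gs; intros [|y ys] Hl H; simpl in *; try discriminate. constructor.
  constructor. apply (H 0); lia. apply IHgs; auto. intros i hi. apply (H (S i)); lia.
Qed.
Lemma nth_map_rcode gs i : nth i (map rcode gs) 0 = rcode (nth i gs RZero).
Proof. revert i; induction gs; intros [|i]; simpl; auto. Qed.

Lemma jcn_eta J : J = jcn (pfst J) (pfst (psnd J)) (psnd (psnd J)).
Proof. unfold jcn. rewrite !cpair_surj. auto. Qed.

Ltac jsimp H := unfold justP, jcn in H; cbv zeta in H; cbn [rcode] in H;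
  repeat rewrite ?pfst_cpair, ?psnd_cpair in H; cbn [Nat.eqb] in H.

Lemma sound d : valid d = true -> forall k c xs v, itl k d <> 0 -> nthc k d = jcn (rcode c) (code_seq xs) v -> eval c xs v.
Proof.
  intros Hv. destruct (code_surj d) as [L <-]. intros k. induction k as [k IH] using lt_wf_ind.
  intros c xs v Hk HJ. apply itl_nz_code in Hk as Hk'.
  unfold valid in Hv. rewrite bforall_spec in Hv. pose proof (len_le_code L).
  specialize (Hv k ltac:(lia)). apply orb_true_iff in Hv. destruct Hv as [Hv|Hv].
  { apply Nat.eqb_eq in Hv. contradiction. }
  apply justb_spec in Hv. rewrite HJ in Hv.
  assert (EarOK : forall j, (exists m, m < k /\ nthc m (code_seq L) = j) -> forall c' xs' v', j = jcn (rcode c') (code_seq xs') v' -> eval c' xs' v').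
  { intros j [m [hm <-]] c' xs' v' e. apply (IH m hm); auto. apply itl_nz_code. lia. }
  clear IH.
  clear HJ Hk Hk' H.
  destruct c; jsimp Hv.
  - subst; constructor.
  - destruct xs as [|x xs]. simpl in Hv; tauto. destruct Hv as [_ ->]. rewrite lhd_cons. constructor.
  - subst. rewrite nthc_code. constructor.
  - destruct Hv as [J' [h1 [h2 [h3 [h4 h5]]]]].
    destruct (code_surj (pfst (psnd J'))) as [ys Hys].
    assert (ef : eval c ys v). { apply (EarOK J' h1). rewrite (jcn_eta J'). rewrite h2, h3, <- Hys. auto. }
    rewrite <- Hys in h4, h5.
    assert (hl : length l = length ys).
    { rewrite <- (length_map rcode l). pose proof (len_le_code (map rcode l)). pose proof (len_le_code ys).
      destruct (Nat.lt_trichotomy (length (map rcode l)) (length ys)) as [h|[h|h]]; auto.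
      - specialize (h4 (length (map rcode l)) ltac:(lia)).
        assert (itl (length (map rcode l)) (code_seq ys) <> 0) by (apply itl_nz_code; auto).
        assert (itl (length (map rcode l)) (code_seq (map rcode l)) = 0).
        { destruct (Nat.eq_dec (itl (length (map rcode l)) (code_seq (map rcode l))) 0); auto. apply itl_nz_code in n. lia. }
        tauto.
      - specialize (h4 (length ys) ltac:(lia)).
        assert (itl (length ys) (code_seq (map rcode l)) <> 0) by (apply itl_nz_code; auto).
        assert (itl (length ys) (code_seq ys) = 0).
        { destruct (Nat.eq_dec (itl (length ys) (code_seq ys)) 0); auto. apply itl_nz_code in n. lia. }
        tauto. }
    econstructor; [|exact ef]. apply evals_nth; auto.
    intros i hi. assert (hi' : i < length (map rcode l)) by (rewrite length_map; auto).
    pose proof (len_le_code (map rcode l)).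
    specialize (h5 i ltac:(lia) (proj2 (itl_nz_code _ _) hi')).
    apply (EarOK _ h5). rewrite !nthc_code, nth_map_rcode. auto.
  - destruct Hv as [hx Hv]. destruct xs as [|n rest]. simpl in hx; tauto.
    rewrite lhd_cons, ltl_cons in Hv. destruct n as [|n].
    + cbn [Nat.eqb] in Hv. constructor. apply (EarOK _ Hv). auto.
    + cbn [Nat.eqb pred] in Hv. destruct Hv as [J' [h1 [h2 [h3 h4]]]].
      assert (e1 : eval (RPrim c1 c2) (n::rest) (psnd (psnd J'))).
      { apply (EarOK J' h1). rewrite (jcn_eta J') at 1. rewrite h2, h3. auto. }
      econstructor. exact e1. apply (EarOK _ h4). auto.
  - destruct Hv as [h1 h2]. constructor. apply (EarOK _ h1). auto.
    intros z hz. destruct (h2 z hz) as [J' [a [b [e d]]]]. destruct (psnd (psnd J')) as [|kk] eqn:E; try contradiction.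
    exists kk. apply (EarOK J' a). rewrite (jcn_eta J') at 1. rewrite b, e, E. auto.
Qed.

Definition goodL (L : list nat) := forall k, k < length L -> justP (fun j => In j (firstn k L)) (nth k L 0).

Lemma nth_firstn' (L : list nat) k m : m < k -> nth m (firstn k L) 0 = nth m L 0.
Proof. revert k m; induction L; intros [|k] [|m] h; simpl; auto; try lia. apply IHL; lia. Qed.

Lemma good_valid L : goodL L -> valid (code_seq L) = true.
Proof.
  intros HG. unfold valid. apply bforall_spec. intros k hk. apply orb_true_iff.
  destruct (Nat.eq_dec (itl k (code_seq L)) 0). left; apply Nat.eqb_eq; auto. right.
  apply itl_nz_code in n. apply justb_spec. rewrite nthc_code. eapply justP_mono; [|apply HG; auto].
  intros j hj. apply In_nth with (d:=0) in hj. destruct hj as [m [hm e]].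
  rewrite length_firstn in hm. exists m; split. lia. rewrite nthc_code, <- e. symmetry; apply nth_firstn'; lia.
Qed.
Lemma good_contains L j : In j L -> contains (code_seq L) j = true.
Proof.
  intros H. apply In_nth with (d:=0) in H. destruct H as [m [hm e]]. unfold contains. apply bexists_spec.
  exists m. pose proof (len_le_code L). split. lia. apply andb_true_iff; split.
  apply negb_true_iff, Nat.eqb_neq, itl_nz_code; auto. apply Nat.eqb_eq. rewrite nthc_code; auto.
Qed.

Lemma goodL_nil : goodL [].
Proof. intros k h; simpl in h; lia. Qed.
Lemma goodL_app L1 L2 : goodL L1 -> goodL L2 -> goodL (L1 ++ L2).
Proof.
  intros H1 H2 k hk. rewrite length_app in hk. destruct (Nat.lt_ge_cases k (length L1)).
  - rewrite app_nth1, firstn_app; auto. replace (k - length L1) with 0 by lia. simpl. rewrite app_nil_r. apply H1; auto.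
  - rewrite app_nth2; auto. eapply justP_mono; [|apply H2; lia].
    intros j hj. rewrite firstn_app. apply in_or_app; right. auto.
Qed.
Lemma goodL_snoc L J : goodL L -> justP (fun j => In j L) J -> goodL (L ++ [J]).
Proof.
  intros H1 H2 k hk. rewrite length_app in hk. simpl in hk. destruct (Nat.lt_ge_cases k (length L)).
  - rewrite app_nth1, firstn_app; auto. replace (k - length L) with 0 by lia. simpl. rewrite app_nil_r. apply H1; auto.
  - assert (k = length L) by lia. subst. rewrite app_nth2, Nat.sub_diag; auto. simpl.
    rewrite firstn_app, firstn_all, Nat.sub_diag. simpl. rewrite app_nil_r. auto.
Qed.

Lemma collect (Q : nat -> nat -> Prop) y : (forall z, z < y -> exists L, goodL L /\ exists j, Q z j /\ In j L) ->
  exists L, goodL L /\ forall z, z < y -> exists j, Q z j /\ In j L.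
Proof.
  induction y; intros H. exists []; split. apply goodL_nil. intros; lia.
  destruct IHy as [L1 [g1 h1]]. intros; apply H; lia.
  destruct (H y) as [L2 [g2 [j [q i]]]]. lia.
  exists (L1 ++ L2). split. apply goodL_app; auto.
  intros z hz. destruct (Nat.eq_dec z y). subst. exists j; split; auto. apply in_or_app; auto.
  destruct (h1 z) as [j' [q' i']]. lia. exists j'; split; auto. apply in_or_app; auto.
Qed.

Ltac jsimp' := unfold justP, jcn; cbv zeta; cbn [rcode];
  repeat rewrite ?pfst_cpair, ?psnd_cpair; cbn [Nat.eqb].

Lemma complete c xs v : eval c xs v -> exists L, goodL L /\ In (jcn (rcode c) (code_seq xs) v) L.
Proof.
  revert c xs v.
  apply (eval_ind2 (fun c xs v => exists L, goodL L /\ In (jcn (rcode c) (code_seq xs) v) L)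
    (fun gs xs ys => exists L, goodL L /\ length gs = length ys /\
        forall i, i < length gs -> In (jcn (rcode (nth i gs RZero)) (code_seq xs) (nth i ys 0)) L)).
  - intros xs. exists [jcn (rcode RZero) (code_seq xs) 0]. split; [|left; auto].
    apply (goodL_snoc []). apply goodL_nil. jsimp'. auto.
  - intros x xs. exists [jcn (rcode RSucc) (code_seq (x::xs)) (S x)]. split; [|left; auto].
    apply (goodL_snoc []). apply goodL_nil. jsimp'. rewrite lhd_cons. split; auto. simpl; lia.
  - intros i xs. exists [jcn (rcode (RProj i)) (code_seq xs) (nth i xs 0)]. split; [|left; auto].
    apply (goodL_snoc []). apply goodL_nil. jsimp'. rewrite nthc_code. auto.
  - intros f gs xs ys v _ [L1 [g1 [hl h1]]] _ [L2 [g2 h2]].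
    exists ((L1 ++ L2) ++ [jcn (rcode (RComp f gs)) (code_seq xs) v]). split.
    2: apply in_or_app; right; left; auto.
    apply goodL_snoc. apply goodL_app; auto. jsimp'.
    exists (jcn (rcode f) (code_seq ys) v). unfold jcn; repeat rewrite ?pfst_cpair, ?psnd_cpair.
    repeat split; auto. apply in_or_app; auto.
    + intros hz. destruct (Nat.eq_dec (itl i (code_seq ys)) 0) as [|nn]; auto. apply itl_nz_code in nn.
      assert (hh : i < length (map rcode gs)) by (rewrite length_map; lia). apply itl_nz_code in hh. contradiction.
    + intros hz. destruct (Nat.eq_dec (itl i (code_seq (map rcode gs))) 0) as [|nn]; auto. apply itl_nz_code in nn.
      rewrite length_map in nn. assert (hh : i < length ys) by lia. apply itl_nz_code in hh. contradiction.
    + intros i _ hnz. apply itl_nz_code in hnz. rewrite length_map in hnz.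
      rewrite !nthc_code, nth_map_rcode. apply in_or_app; left. apply (h1 i hnz).
  - intros f g xs v _ [L [g1 h1]]. exists (L ++ [jcn (rcode (RPrim f g)) (code_seq (0::xs)) v]). split.
    2: apply in_or_app; right; left; auto.
    apply goodL_snoc; auto. jsimp'. rewrite lhd_cons, ltl_cons. cbn [Nat.eqb]. split; auto. simpl; lia.
  - intros f g n xs r v _ [L1 [g1 h1]] _ [L2 [g2 h2]].
    exists ((L1 ++ L2) ++ [jcn (rcode (RPrim f g)) (code_seq (S n::xs)) v]). split.
    2: apply in_or_app; right; left; auto.
    apply goodL_snoc. apply goodL_app; auto. jsimp'. rewrite lhd_cons, ltl_cons. cbn [Nat.eqb pred].
    split. simpl; lia.
    exists (jcn (rcode (RPrim f g)) (code_seq (n::xs)) r). unfold jcn; cbn [rcode]; repeat rewrite ?pfst_cpair, ?psnd_cpair.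
    repeat split; auto. apply in_or_app; left; auto. apply in_or_app; right; auto.
  - intros f xs y _ [L0 [g0 h0]] H.
    destruct (collect (fun z j => exists k, j = jcn (rcode f) (code_seq (z::xs)) (S k)) y) as [L1 [g1 h1]].
    { intros z hz. destruct (H z hz) as [k [_ [L [g h]]]]. exists L; split; auto. exists (jcn (rcode f) (code_seq (z::xs)) (S k)); eauto. }
    exists ((L0 ++ L1) ++ [jcn (rcode (RMu f)) (code_seq xs) y]). split.
    2: apply in_or_app; right; left; auto.
    apply goodL_snoc. apply goodL_app; auto. jsimp'. split. apply in_or_app; left; auto.
    intros z hz. destruct (h1 z hz) as [j [[k ->] hj]]. exists (jcn (rcode f) (code_seq (z::xs)) (S k)).
    unfold jcn; repeat rewrite ?pfst_cpair, ?psnd_cpair. repeat split; auto. apply in_or_app; right; auto.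
  - intros xs. exists []. split. apply goodL_nil. split; auto. intros i h; simpl in h; lia.
  - intros g gs xs y ys _ [L1 [g1 h1]] _ [L2 [g2 [hl h2]]]. exists (L1 ++ L2). split. apply goodL_app; auto.
    split. simpl; auto. intros [|i] hi; simpl. apply in_or_app; auto. apply in_or_app; right. apply h2. simpl in hi; lia.
Qed.

Lemma dec_of_PRb (b : nat -> bool) : PRb 1 (fun xs => negb (b (nth 0 xs 0))) -> decidable_set (fun x => b x = true).
Proof.
  intros [c Hc]. exists c. intros x. specialize (Hc [x] eq_refl). simpl in Hc.
  destruct (b x); simpl in *; split; intros; auto; congruence.
Qed.
Lemma PRb_of_dec A : decidable_set A -> exists b : nat -> bool, PRb 1 (fun xs => negb (b (nth 0 xs 0))) /\ forall x, A x <-> b x = true.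
Proof.
  intros [c Hc]. exists (fun x => if excluded_middle_informative (A x) then true else false). split.
  - exists c. intros [|x [|]] h; simpl in h; try lia. simpl.
    destruct (excluded_middle_informative (A x)); simpl; apply Hc; auto.
  - intros x. destruct (excluded_middle_informative (A x)); split; auto; congruence.
Qed.
Lemma PR1_of (f : nat -> nat) : PR 1 (fun xs => f (nth 0 xs 0)) -> computable f.
Proof. intros [c Hc]. exists c. intros x. apply (Hc [x]). auto. Qed.

Lemma Sigma0_ext p A A' : (forall x, A x <-> A' x) -> Sigma0 p A -> Sigma0 p A'.
Proof.
  destruct p; simpl.
  - intros H [c Hc]. exists c. intros x. rewrite <- H. auto.
  - intros H [B [HB HA]]. exists B; split; auto. intros x. rewrite <- H. auto.
Qed.

Definition PR1 (h : nat -> nat) := PR 1 (fun xs => h (nth 0 xs 0)).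
Definition PRB1 (b : nat -> bool) := PRb 1 (fun xs => b (nth 0 xs 0)).

Lemma dec_bool (b : nat -> bool) : PRB1 b -> decidable_set (fun x => b x = true).
Proof. intros H. apply dec_of_PRb. unfold PRB1 in H. pr. Qed.

Lemma PRB1_of_neg b : PRb 1 (fun xs => negb (b (nth 0 xs 0))) -> PRB1 b.
Proof. intros H. unfold PRB1. eapply PR_ext. apply PRb_negb, H. intros; simpl; destruct (b _); auto. Qed.

Lemma preimage p : forall A h, Sigma0 p A -> PR1 h -> Sigma0 p (fun x => A (h x)).
Proof.
  induction p; intros A h HA Hh; simpl in *.
  - destruct HA as [c Hc]. destruct Hh as [ch Hh]. exists (RComp c [ch]). intros x.
    split; intros H; apply (eComp c [ch] [x] [h x]); (try (constructor; [apply (Hh [x]); auto | constructor])); apply Hc; auto.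
  - destruct HA as [B [HB HA]]. exists (fun m => B (cpair (h (pfst m)) (psnd m))). split.
    + apply (IHp B (fun m => cpair (h (pfst m)) (psnd m))); auto. unfold PR1.
      apply PR_cpair. apply PR_app1; auto. pr. pr.
    + intros x. rewrite HA. split; intros [y hy]; exists y; rewrite pfst_cpair, psnd_cpair in *; auto.
Qed.

Lemma dec_Sigma p A : decidable_set A -> Sigma0 p A.
Proof.
  revert A; induction p; intros A HA; simpl; auto.
  destruct (PRb_of_dec A HA) as [b [Hb HAb]].
  exists (fun m => b (pfst m) = false). split.
  - apply IHp. apply (Sigma0_ext 0 (fun m => negb (b (pfst m)) = true)).
    intros; rewrite negb_true_iff; tauto. apply dec_bool. unfold PRB1. cbv beta. apply PRb_negb.
    apply (PRb_app1 b). apply PRB1_of_neg; auto. pr.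
  - intros x. rewrite HAb. split. intros h; exists 0; rewrite pfst_cpair; congruence.
    intros [y hy]. rewrite pfst_cpair in hy. destruct (b x); auto.
Qed.

Ltac pr ::= repeat (cbv beta; first [ assumption |
   match goal with
   | |- PRb _ _ => first [pr_funb | pr_genb | (eapply PRb_app1; [eassumption|]) ]
   | |- PR _ _ => first [pr_base | pr_fun | pr_gen | (eapply PR_app1; [eassumption|]) ] end]).

Ltac ps := repeat rewrite ?pfst_cpair, ?psnd_cpair in *.

Lemma dec_to_bool A : decidable_set A -> exists b, PRB1 b /\ forall x, A x <-> b x = true.
Proof. intros HA. destruct (PRb_of_dec A HA) as [b [Hb HAb]]. exists b; split; auto. apply PRB1_of_neg; auto. Qed.

Lemma andor p : (forall A B, Sigma0 p A -> Sigma0 p B -> Sigma0 p (fun x => A x /\ B x)) /\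
                (forall A B, Sigma0 p A -> Sigma0 p B -> Sigma0 p (fun x => A x \/ B x)).
Proof.
  induction p.
  - split; intros A B HA HB; destruct (dec_to_bool A HA) as [a [Ha HAa]]; destruct (dec_to_bool B HB) as [b [Hb HBb]].
    + apply (Sigma0_ext 0 (fun x => a x && b x = true)). intros; rewrite andb_true_iff, HAa, HBb; tauto.
      apply dec_bool. unfold PRB1 in *. pr.
    + apply (Sigma0_ext 0 (fun x => a x || b x = true)). intros; rewrite orb_true_iff, HAa, HBb; tauto.
      apply dec_bool. unfold PRB1 in *. pr.
  - destruct IHp as [IHand IHor]. split.
    + intros A B [BA [HBA HA]] [BB [HBB HB]].
      exists (fun m => BA (cpair (pfst m) (pfst (psnd m))) \/ BB (cpair (pfst m) (psnd (psnd m)))). split.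
      * apply IHor; apply preimage; auto; unfold PR1; pr.
      * intros x. rewrite HA, HB. split.
        -- intros [[y1 h1] [y2 h2]]. exists (cpair y1 y2). ps. tauto.
        -- intros [w hw]. ps. apply not_or_and in hw. destruct hw.
           split; [exists (pfst w)|exists (psnd w)]; auto.
    + intros A B [BA [HBA HA]] [BB [HBB HB]].
      exists (fun m => BA m /\ BB m). split. apply IHand; auto.
      intros x. rewrite HA, HB. split.
      * intros [[y h]|[y h]]; exists y; tauto.
      * intros [y h]. apply not_and_or in h. destruct h; [left|right]; eauto.
Qed.
Lemma Sigma_and p A B : Sigma0 p A -> Sigma0 p B -> Sigma0 p (fun x => A x /\ B x).
Proof. apply andor. Qed.
Lemma Sigma_or p A B : Sigma0 p A -> Sigma0 p B -> Sigma0 p (fun x => A x \/ B x).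
Proof. apply andor. Qed.

Lemma choice_list (P : nat -> nat -> Prop) m : (forall l, l < m -> exists y, P l y) ->
  exists ys, length ys = m /\ forall l, l < m -> P l (nth l ys 0).
Proof.
  induction m; intros H. exists []; split; auto; intros; lia.
  destruct IHm as [ys [hl hys]]. intros; apply H; lia.
  destruct (H m) as [y hy]. lia.
  exists (ys ++ [y]). split. rewrite length_app; simpl; lia.
  intros l hl'. destruct (Nat.eq_dec l m).
  - subst. rewrite app_nth2, Nat.sub_diag; auto; lia.
  - rewrite app_nth1; try lia. apply hys; lia.
Qed.

Lemma bquant p : (forall B mb, Sigma0 p B -> PR1 mb -> Sigma0 p (fun n => exists l, l < mb n /\ B (cpair n l))) /\
                 (forall B mb, Sigma0 p B -> PR1 mb -> Sigma0 p (fun n => forall l, l < mb n -> B (cpair n l))).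
Proof.
  induction p.
  - split; intros B mb HB Hm; destruct (dec_to_bool B HB) as [b [Hb HBb]]; unfold PR1, PRB1 in *.
    + apply (Sigma0_ext 0 (fun n => bexists (mb n) (fun l => b (cpair n l)) = true)).
      intros n. rewrite bexists_spec. split; intros [l [h1 h2]]; exists l; split; auto; apply HBb; auto.
      apply dec_bool. unfold PRB1. pr.
    + apply (Sigma0_ext 0 (fun n => bforall (mb n) (fun l => b (cpair n l)) = true)).
      intros n. rewrite bforall_spec. split; intros h l hl; apply HBb; auto.
      apply dec_bool. unfold PRB1. pr.
  - split; intros B mb [C [HC HB]] Hm; unfold PR1 in *.
    + exists (fun m' => (fun m' => mb (pfst m') <=? pfst (psnd m')) m' = true \/
                         C (cpair (cpair (pfst m') (pfst (psnd m'))) (psnd (psnd m')))). split.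
      * apply Sigma_or. apply dec_Sigma, dec_bool. unfold PRB1. pr.
        apply (preimage p C (fun m' => cpair (cpair (pfst m') (pfst (psnd m'))) (psnd (psnd m')))); auto.
        unfold PR1. pr.
      * intros n. split.
        -- intros [l [hl hB]]. apply HB in hB. destruct hB as [y hy]. exists (cpair l y). ps.
           intros [h|h]; auto. apply Nat.leb_le in h. lia.
        -- intros [w hw]. ps. apply not_or_and in hw. destruct hw as [h1 h2].
           exists (pfst w). split. destruct (Nat.leb_spec (mb n) (pfst w)); auto. congruence.
           apply HB. exists (psnd w); auto.
    + destruct IHp as [IHex _].
      exists (fun m' => exists l, l < mb (pfst m') /\
         C (cpair (cpair (pfst (pfst (cpair m' l))) (psnd (cpair m' l))) (nthc (psnd (cpair m' l)) (psnd (pfst (cpair m' l)))))).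
      split.
      * apply (IHex (fun m'' => C (cpair (cpair (pfst (pfst m'')) (psnd m'')) (nthc (psnd m'') (psnd (pfst m''))))) (fun m' => mb (pfst m'))).
        apply preimage; auto. unfold PR1; pr. unfold PR1; pr.
      * intros n. split.
        -- intros H. assert (H' : forall l, l < mb n -> exists y, ~ C (cpair (cpair n l) y)).
           { intros l hl. apply HB. auto. }
           destruct (choice_list _ _ H') as [ys [_ hys]]. exists (code_seq ys). ps.
           intros [l [hl hc]]. ps. rewrite nthc_code in hc. apply (hys l hl). auto.
        -- intros [w hw] l hl. apply HB. exists (nthc l w). intro hc. apply hw. exists l. ps. auto.
Qed.
Lemma Sigma_bex p B mb : Sigma0 p B -> PR1 mb -> Sigma0 p (fun n => exists l, l < mb n /\ B (cpair n l)).
Proof. apply bquant. Qed.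
Lemma Sigma_ball p B mb : Sigma0 p B -> PR1 mb -> Sigma0 p (fun n => forall l, l < mb n -> B (cpair n l)).
Proof. apply bquant. Qed.

Lemma Sigma_ex q B : Sigma0 (S q) B -> Sigma0 (S q) (fun n => exists z, B (cpair n z)).
Proof.
  intros [C [HC HB]]. exists (fun m => C (cpair (cpair (pfst m) (pfst (psnd m))) (psnd (psnd m)))). split.
  apply preimage; auto. unfold PR1; pr.
  intros n. split.
  - intros [z hz]. apply HB in hz. destruct hz as [y hy]. exists (cpair z y). ps. auto.
  - intros [w hw]. ps. exists (pfst w). apply HB. exists (psnd w). auto.
Qed.

Ltac pr_funb ::= first [apply PRb_valid | apply PRb_contains].

Lemma eval_iff_check c xs v : eval c xs v <-> exists d, valid d = true /\ contains d (jcn (rcode c) (code_seq xs) v) = true.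
Proof.
  split.
  - intros H. destruct (complete c xs v H) as [L [g i]]. exists (code_seq L). split.
    apply good_valid; auto. apply good_contains; auto.
  - intros [d [h1 h2]]. unfold contains in h2. apply bexists_spec in h2. destruct h2 as [k [hk e]].
    apply andb_true_iff in e. destruct e as [e1 e2]. apply negb_true_iff, Nat.eqb_neq in e1. apply Nat.eqb_eq in e2.
    apply (sound d h1 k); auto.
Qed.

Definition V1 n := exists y d, valid d = true /\ contains d (jcn (pfst n) (code_seq [cpair (psnd n) y]) 1) = true.

Definition chk m := valid (psnd (psnd m)) && contains (psnd (psnd m)) (jcn (pfst (pfst m)) (S (cpair (cpair (psnd (pfst m)) (pfst (psnd m))) 0)) 1).

Lemma V1_sigma : Sigma0 1 V1.
Proof.
  exists (fun m => negb (chk m) = true). split.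
  - apply dec_bool. unfold PRB1, chk, jcn. pr.
  - intros n. unfold V1. split.
    + intros [y [d [h1 h2]]]. exists (cpair y d). unfold chk. ps. simpl. rewrite h1. simpl in h2. rewrite h2. simpl. congruence.
    + intros [w hw]. unfold chk in hw. ps. destruct (valid (psnd w)) eqn:E1; simpl in hw; [|tauto].
      destruct (contains _ _) eqn:E2 in hw; simpl in hw; [|tauto].
      exists (pfst w), (psnd w). split; auto.
Qed.

Lemma V1_univ A : Sigma0 1 A -> exists e, forall x, A x <-> V1 (cpair e x).
Proof.
  intros [B [[c Hc] HA]]. exists (rcode c). intros x. rewrite HA. unfold V1. ps. split.
  - intros [y hy]. exists y. apply eval_iff_check. apply Hc; auto.
  - intros [y [d [h1 h2]]]. exists y. intros hB. apply Hc in hB.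
    assert (eval c [cpair x y] 1) by (apply eval_iff_check; eauto).
    pose proof (eval_det _ _ _ hB _ H). discriminate.
Qed.

Fixpoint Vu (q : nat) (n : nat) : Prop := match q with
  | 0 => V1 n
  | S q' => exists y, ~ Vu q' (cpair (pfst n) (cpair (psnd n) y)) end.

Lemma Vu_sigma q : Sigma0 (S q) (Vu q).
Proof.
  induction q. apply V1_sigma.
  exists (fun m => Vu q (cpair (pfst (pfst m)) (cpair (psnd (pfst m)) (psnd m)))). split.
  - apply preimage; auto. unfold PR1; pr.
  - intros n. simpl. split; intros [y hy]; exists y; ps; auto.
Qed.

Lemma Vu_univ q A : Sigma0 (S q) A -> exists e, forall x, A x <-> Vu q (cpair e x).
Proof.
  revert A; induction q; intros A HA. apply V1_univ; auto.
  destruct HA as [B [HB HA]]. destruct (IHq B HB) as [e He]. exists e. intros x. rewrite HA. simpl. ps.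
  split; intros [y hy]; exists y; rewrite He in *; auto.
Qed.

Fixpoint steps (P : nat -> nat -> Prop) (x : nat) (l : list nat) : Prop :=
  match l with [] => True | y :: l' => P x y /\ steps P y l' end.
Fixpoint lastd (x : nat) (l : list nat) : nat := match l with [] => x | y :: l' => lastd y l' end.

Lemma steps_app P x l1 l2 : steps P x (l1 ++ l2) <-> steps P x l1 /\ steps P (lastd x l1) l2.
Proof. revert x; induction l1; intros x; simpl. tauto. rewrite IHl1. tauto. Qed.
Lemma lastd_app x l1 l2 : lastd x (l1 ++ l2) = lastd (lastd x l1) l2.
Proof. revert x; induction l1; simpl; auto. Qed.
Lemma steps_rev (P : nat -> nat -> Prop) (Psym : forall u v, P u v -> P v u) x l :
  steps P x l -> exists l', steps P (lastd x l) l' /\ lastd (lastd x l) l' = x.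
Proof.
  revert x; induction l as [|y l IH]; intros x H. exists []; simpl; auto.
  destruct H as [h1 h2]. destruct (IH y h2) as [l' [s' e']]. simpl.
  exists (l' ++ [x]). rewrite steps_app, lastd_app, e'. simpl. auto.
Qed.
Lemma steps_mono (P Q : nat -> nat -> Prop) x l : (forall u v, P u v -> Q u v) -> steps P x l -> steps Q x l.
Proof. revert x; induction l; simpl; intuition. Qed.
Lemma steps_nth P x l : steps P x l <-> forall k, k < length l -> P (if k =? 0 then x else nth (pred k) l 0) (nth k l 0).
Proof.
  revert x; induction l as [|y l IH]; intros x; simpl. split; auto; intros; lia.
  rewrite IH. split.
  - intros [h1 h2] [|k] hk; simpl; auto. specialize (h2 k ltac:(lia)). destruct k; auto.
  - intros H. split. apply (H 0); lia. intros k hk. specialize (H (S k) ltac:(lia)). simpl in H. destruct k; auto.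
Qed.
Lemma lastd_nth x l : lastd x l = if length l =? 0 then x else nth (pred (length l)) l 0.
Proof. revert x; induction l; intros x; simpl; auto. rewrite IHl. destruct l; simpl; auto. Qed.

Section Main.
Variable q : nat.
Definition U := Vu q.
Definition Pc e c u v := u < lenc c /\ v < lenc c /\
   (U (cpair e (cpair (nthc u c) (nthc v c))) \/ U (cpair e (cpair (nthc v c) (nthc u c)))).
Definition Chain e c i j := exists l, steps (Pc e c) i l /\ lastd i l = j.
Definition EE a b := a = b \/ (pfst a = pfst b /\ pfst (psnd a) = pfst (psnd b) /\
   Chain (pfst a) (pfst (psnd a)) (psnd (psnd a)) (psnd (psnd b))).

Lemma Pc_sym e c u v : Pc e c u v -> Pc e c v u.
Proof. unfold Pc; tauto. Qed.

Lemma EE_equiv : equivalence_rel EE.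
Proof.
  unfold EE; split; [|split].
  - intros x; left; auto.
  - intros x y [->|[h1 [h2 [l [s e]]]]]. left; auto. right. split; auto. split; auto.
    destruct (steps_rev _ (Pc_sym _ _) _ _ s) as [l' [s' e']]. rewrite e in s', e'.
    exists l'. rewrite <- h1, <- h2. auto.
  - intros x y z [->|[h1 [h2 [l [s e]]]]]; auto. intros [->|[h3 [h4 [l' [s' e']]]]].
    right; split; auto; split; auto; exists l; auto.
    right. split. congruence. split. congruence. exists (l ++ l'). rewrite steps_app, lastd_app, e.
    rewrite h1, h2 in *. auto.
Qed.

Lemma Pc_sigma fe fc fu fv : PR1 fe -> PR1 fc -> PR1 fu -> PR1 fv -> Sigma0 (S q) (fun m => Pc (fe m) (fc m) (fu m) (fv m)).
Proof.
  intros. unfold Pc.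
  apply (Sigma0_ext _ (fun m => ((fu m <? lenc (fc m)) && (fv m <? lenc (fc m))) = true /\ (U (cpair (fe m) (cpair (nthc (fu m) (fc m)) (nthc (fv m) (fc m)))) \/ U (cpair (fe m) (cpair (nthc (fv m) (fc m)) (nthc (fu m) (fc m))))))).
  { intros m. rewrite andb_true_iff, !Nat.ltb_lt. tauto. }
  apply Sigma_and. apply dec_Sigma, dec_bool. unfold PRB1, PR1 in *; pr.
  apply Sigma_or; apply (preimage (S q) U); try apply Vu_sigma; unfold PR1 in *; pr.
Qed.

Definition ef m2 := pfst (pfst (pfst (pfst m2))).
Definition cf m2 := pfst (psnd (pfst (pfst (pfst m2)))).
Definition prevf m2 := if psnd m2 =? 0 then psnd (psnd (pfst (pfst (pfst m2)))) else nthc (pred (psnd m2)) (psnd (pfst m2)).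
Definition curf m2 := nthc (psnd m2) (psnd (pfst m2)).
Definition lastok m := if lenc (psnd m) =? 0 then psnd (psnd (pfst (pfst m))) =? psnd (psnd (psnd (pfst m)))
   else nthc (pred (lenc (psnd m))) (psnd m) =? psnd (psnd (psnd (pfst m))).
Definition TT m := (forall l, l < lenc (psnd m) -> Pc (ef (cpair m l)) (cf (cpair m l)) (prevf (cpair m l)) (curf (cpair m l)))
   /\ lastok m = true.
Definition SS n := (pfst n =? psnd n) = true \/
   (((pfst (pfst n) =? pfst (psnd n)) && (pfst (psnd (pfst n)) =? pfst (psnd (psnd n)))) = true /\ exists w, TT (cpair n w)).

Lemma SS_sigma : Sigma0 (S q) SS.
Proof.
  unfold SS. apply Sigma_or. apply dec_Sigma, dec_bool. unfold PRB1; pr.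
  apply Sigma_and. apply dec_Sigma, dec_bool. unfold PRB1; pr.
  apply Sigma_ex. unfold TT. apply Sigma_and.
  - apply (Sigma_ball (S q) (fun m2 => Pc (ef m2) (cf m2) (prevf m2) (curf m2)) (fun m => lenc (psnd m))).
    apply Pc_sigma; unfold PR1, ef, cf, prevf, curf; pr. unfold PR1; pr.
  - apply dec_Sigma, dec_bool. unfold PRB1, lastok; pr.
Qed.

Lemma TT_iff n s : TT (cpair n (code_seq s)) <-> steps (Pc (pfst (pfst n)) (pfst (psnd (pfst n)))) (psnd (psnd (pfst n))) s
   /\ lastd (psnd (psnd (pfst n))) s = psnd (psnd (psnd n)).
Proof.
  unfold TT, lastok. rewrite steps_nth, lastd_nth. ps. rewrite lenc_code, nthc_code. split.
  - intros [h1 h2]. split.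
    + intros k hk. specialize (h1 k hk). unfold ef, cf, prevf, curf in h1. ps. rewrite !nthc_code in h1. auto.
    + destruct (length s =? 0); apply Nat.eqb_eq; auto.
  - intros [h1 h2]. split.
    + intros k hk. specialize (h1 k hk). unfold ef, cf, prevf, curf. ps. rewrite !nthc_code. auto.
    + destruct (length s =? 0); apply Nat.eqb_eq; auto.
Qed.

Lemma SS_iff n : SS n <-> EE (pfst n) (psnd n).
Proof.
  unfold SS, EE, Chain. rewrite Nat.eqb_eq, andb_true_iff, !Nat.eqb_eq. split.
  - intros [h|[[h1 h2] [w hw]]]; auto. right. split; auto. split; auto.
    destruct (code_surj w) as [s <-]. apply TT_iff in hw. exists s. auto.
  - intros [h|[h1 [h2 [s hs]]]]; auto. right. split; auto. exists (code_seq s). apply TT_iff. auto.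
Qed.

Lemma rel_set (R : nat -> nat -> Prop) n : (exists x y, n = cpair x y /\ R x y) <-> R (pfst n) (psnd n).
Proof.
  split. intros [x [y [-> h]]]. ps. auto.
  intros h. exists (pfst n), (psnd n). rewrite cpair_surj. auto.
Qed.

Lemma EE_sigma : Sigma0_eqrel (S q) EE.
Proof.
  split. apply EE_equiv. unfold Sigma0_rel.
  apply (Sigma0_ext _ SS). intros n. rewrite rel_set, SS_iff. tauto. apply SS_sigma.
Qed.
End Main.

Section Main2.
Variable q : nat.

Lemma chain_F (Fr : nat -> nat -> Prop) e s : equivalence_rel Fr ->
  (forall x y, Fr x y <-> U q (cpair e (cpair x y))) ->
  forall l x, steps (Pc q e (code_seq s)) x l -> Fr (nth x s 0) (nth (lastd x l) s 0).
Proof.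
  intros [Hr [Hs Ht]] RF. induction l as [|y l IH]; intros x H; simpl. apply Hr.
  destruct H as [[_ [_ h]] h2]. apply (Ht _ (nth y s 0)); auto.
  rewrite !nthc_code in h. destruct h as [h|h]; apply RF in h; auto.
Qed.

Definition Gf e (c : nat) := nat_rect (fun _ => nat) 0 (fun t r => S (cpair (cpair e (cpair c (lenc c - S t))) r)) (lenc c).

Lemma Gf_aux e s t : t <= length s ->
  nat_rect (fun _ => nat) 0 (fun t r => S (cpair (cpair e (cpair (code_seq s) (lenc (code_seq s) - S t))) r)) t =
  code_seq (map (fun i => cpair e (cpair (code_seq s) i)) (seq (length s - t) t)).
Proof.
  rewrite lenc_code. induction t; intros h; simpl; auto.
  rewrite IHt by lia. f_equal. replace (length s - t) with (S (length s - S t)) by lia. auto.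
Qed.
Lemma Gf_code e s : Gf e (code_seq s) = code_seq (map (fun i => cpair e (cpair (code_seq s) i)) (seq 0 (length s))).
Proof. unfold Gf. rewrite Gf_aux; rewrite lenc_code; auto. rewrite Nat.sub_diag; auto. Qed.

Lemma nth_map_seq0 (f : nat -> nat) n k : k < n -> nth k (map f (seq 0 n)) 0 = f k.
Proof. intros. rewrite nth_indep with (d' := f 0) by (rewrite length_map, length_seq; auto). rewrite map_nth, seq_nth; auto. Qed.

Lemma fin_complete Fr : Sigma0_eqrel (S q) Fr -> fin_reducible Fr (EE q).
Proof.
  intros [Heq HF]. unfold Sigma0_rel in HF.
  assert (HF' : Sigma0 (S q) (fun n => Fr (pfst n) (psnd n))) by (eapply Sigma0_ext; [|exact HF]; intros; apply rel_set).
  destruct (Vu_univ q _ HF') as [e He].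
  assert (RF : forall x y, Fr x y <-> U q (cpair e (cpair x y))).
  { intros x y. rewrite <- He. ps. tauto. }
  exists (fun s => map (fun i => cpair e (cpair (code_seq s) i)) (seq 0 (length s))). split.
  - assert (HP : PR 1 (fun xs => Gf e (nth 0 xs 0))) by (unfold Gf; pr).
    destruct HP as [c Hc]. exists c. intros s. rewrite <- Gf_code. apply (Hc [code_seq s]). auto.
  - intros s hs. split. rewrite length_map, length_seq; auto.
    intros i j [hij hj].
    assert (Hn : forall k, k < length s -> nth k (map (fun i => cpair e (cpair (code_seq s) i)) (seq 0 (length s))) 0 = cpair e (cpair (code_seq s) k)).
    { intros k hk. apply (nth_map_seq0 (fun i => cpair e (cpair (code_seq s) i))); auto. }
    rewrite !Hn by lia. unfold EE. ps. split.
    + intros h. right. split; auto. split; auto. exists [j]. simpl. split; auto. split; auto.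
      unfold Pc. rewrite lenc_code, !nthc_code. split; [lia|split;[lia|]]. left. apply RF; auto.
    + intros [h|[_ [_ [l [hl e2]]]]].
      * apply cpair_inj in h. destruct h as [_ h]. apply cpair_inj in h. lia.
      * rewrite <- e2. apply (chain_F Fr e s Heq RF l i hl).
Qed.

Definition K x := U q (cpair x x).

Lemma K_undec : ~ decidable_set K.
Proof.
  intros HK. destruct (dec_to_bool _ HK) as [b [Hb HKb]].
  assert (Hc : Sigma0 (S q) (fun x => b x = false)).
  { apply dec_Sigma. apply (Sigma0_ext 0 (fun x => negb (b x) = true)). intros; rewrite negb_true_iff; tauto.
    apply dec_bool. unfold PRB1 in *; pr. }
  destruct (Vu_univ q _ Hc) as [e He]. specialize (He e). specialize (HKb e). unfold K in HKb.
  destruct (b e); intuition; discriminate.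
Qed.

Definition FK x y := x = y \/ (K x /\ K y).

Lemma FK_sigma : Sigma0_eqrel (S q) FK.
Proof.
  split.
  - unfold FK. split; [|split]. auto. intros x y [h|h]; [left|right]; intuition.
    intros x y z [h|h] [h'|h']; subst; auto; right; intuition.
  - unfold Sigma0_rel. apply (Sigma0_ext _ (fun n => (pfst n =? psnd n) = true \/ (U q (cpair (pfst n) (pfst n)) /\ U q (cpair (psnd n) (psnd n))))).
    { intros n. rewrite rel_set. unfold FK, K. rewrite Nat.eqb_eq. tauto. }
    apply Sigma_or. apply dec_Sigma, dec_bool. unfold PRB1; pr.
    apply Sigma_and; apply (preimage (S q) (U q)); try apply Vu_sigma; unfold PR1; pr.
Qed.

Lemma EE_block a b : EE q a b -> b = a \/ exists j, j < lenc (pfst (psnd a)) /\ b = cpair (pfst a) (cpair (pfst (psnd a)) j).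
Proof.
  intros [h|[h1 [h2 [l [hl e]]]]]; auto.
  destruct l as [|y l].
  - simpl in e. left.
    assert (Ha : a = cpair (pfst a) (cpair (pfst (psnd a)) (psnd (psnd a)))) by (rewrite !cpair_surj; auto).
    assert (Hb : b = cpair (pfst b) (cpair (pfst (psnd b)) (psnd (psnd b)))) by (rewrite !cpair_surj; auto).
    rewrite Ha, Hb. congruence.
  - right. exists (psnd (psnd b)).
    assert (forall l x, steps (Pc q (pfst a) (pfst (psnd a))) x l -> l <> [] -> lastd x l < lenc (pfst (psnd a))).
    { induction l0; intros x hs hn. congruence. destruct hs as [[_ [h _]] hs]. destruct l0. simpl; auto. simpl. apply (IHl0 a0); auto. congruence. }
    split. rewrite <- e. apply H; auto. congruence.
    rewrite h1, h2, !cpair_surj. auto.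
Qed.

Lemma finite_filter (Pr : nat -> Prop) (L : list nat) : exists L', forall b, In b L' <-> In b L /\ Pr b.
Proof.
  induction L as [|a L [L' HL']]. exists []; simpl; tauto.
  destruct (classic (Pr a)).
  - exists (a :: L'). intros b. simpl. rewrite HL'. split; intros; intuition; subst; auto.
  - exists L'. intros b. simpl. rewrite HL'. split; intros; intuition; subst; tauto.
Qed.

Lemma PRb_mem k f L : PR k f -> PRb k (fun xs => existsb (fun y => f xs =? y) L).
Proof.
  intros Hf. induction L; simpl. apply PRb_const. apply PRb_orb; auto. apply PRb_eqb; auto. apply PR_const.
Qed.

Lemma not_creducible : ~ creducible FK (EE q).
Proof.
  intros [g [[cg Hg] Hred]]. apply K_undec.
  destruct (classic (exists x0, K x0)) as [[x0 Hx0]|Hno].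
  2:{ destruct (PR_const 1 1) as [c Hc]. exists c. intros x. split; intros h. exfalso; eauto. apply (Hc [x]); auto. }
  set (a := g x0).
  destruct (finite_filter (fun b => EE q a b) (a :: map (fun j => cpair (pfst a) (cpair (pfst (psnd a)) j)) (seq 0 (lenc (pfst (psnd a)))))) as [L' HL'].
  assert (Hg' : PR 1 (fun xs => g (nth 0 xs 0))). { exists cg. intros [|x [|]] h; simpl in h; try lia. apply Hg. }
  change (Sigma0 0 K).
  apply (Sigma0_ext 0 (fun x => ((x =? x0) || existsb (fun y => g x =? y) L') = true)).
  2:{ apply dec_bool. unfold PRB1. apply PRb_orb. pr. apply (PRb_mem 1 (fun xs => g (nth 0 xs 0))). auto. }
  intros x. rewrite orb_true_iff, Nat.eqb_eq, existsb_exists. split.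
  - intros [->|[y [hy e]]]; auto. apply Nat.eqb_eq in e. subst y. apply HL' in hy. destruct hy as [_ hy].
    apply Hred in hy. destruct hy as [->|[_ h]]; auto.
  - intros hx. destruct (Nat.eq_dec x x0); auto. right. exists (g x). split; [|apply Nat.eqb_refl].
    assert (hE : EE q a (g x)) by (apply Hred; right; auto).
    apply HL'. split; auto. destruct (EE_block _ _ hE) as [h|[j [hj h]]]. left; auto.
    right. rewrite h. apply in_map_iff. exists j. split; auto. apply in_seq. lia.
Qed.
End Main2.

Theorem theorem4p12 : forall p : nat, 0 < p ->
  exists E : nat -> nat -> Prop,
    Sigma0_eqrel p E /\
    (forall F, Sigma0_eqrel p F -> fin_reducible F E) /\
    (exists F, Sigma0_eqrel p F /\ ~ creducible F E).
Proof.
  intros [|q] hp. lia. exists (EE q). split. apply EE_sigma. split. apply fin_complete.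
  exists (FK q). split. apply FK_sigma. apply not_creducible.
Qed.
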